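(* Let $G$ be a profinite group, written as the inverse limit $G = \varprojlim G_i$ of its finite quotients $G_i$, and let $H$ be a finite discrete abelian group. Then $H^2_{\mathrm{ts}}(G,H) = \varprojlim H^2_{\mathrm{ts}}(G_i,H)$.
   Context: A profinite group is a topological group isomorphic to an inverse limit of finite groups, with the inverse limit topology. For a topological group $G$ and an abelian topological group $H$, the topo-symmetric cohomology is $H^2_{\mathrm{ts}}(G,H) = Z^2_{\mathrm{ts}}(G,H)/B^2_{\mathrm{ts}}(G,H)$, where $Z^2_{\mathrm{ts}}(G,H)$ is the set of continuous 2-cocycles $c \in Z^2(G,H)$ satisfying $c(g,h) = c(h,g)$ for all $g,h \in G$, and $B^2_{\mathrm{ts}}(G,H)$ the coboundaries among them; it is a subgroup of the continuous cohomology group $H^2(G,H)$. *)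

(* Defs.v *)
From HB Require Import structures.
From mathcomp Require Import all_boot all_algebra.
From mathcomp Require Import boolp classical_sets topology.

Set Implicit Arguments.
Unset Strict Implicit.
Unset Printing Implicit Defensive.

Import GRing.Theory.
Local Open Scope classical_set_scope.
Local Open Scope ring_scope.

Section TopGroup.
Variables (T : topologicalType) (mul : T -> T -> T) (inv : T -> T) (e : T).

Definition is_topgroup : Prop :=
  (forall x y z, mul x (mul y z) = mul (mul x y) z) /\
  (forall x, mul e x = x) /\ (forall x, mul x e = x) /\
  (forall x, mul (inv x) x = e) /\ (forall x, mul x (inv x) = e) /\
  continuous (fun p : T * T => mul p.1 p.2) /\ continuous inv.

Definition open_normal_fi (N : set T) : Prop :=
  N e /\ (forall x y, N x -> N y -> N (mul x y)) /\ (forall x, N x -> N (inv x)) /\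
  (forall g n, N n -> N (mul (mul g n) (inv g))) /\ open N /\
  (exists s : seq T, forall g, exists x, x \in s /\ N (mul (inv x) g)).

(* Profinite: the canonical map G -> lim_{N} G/N (N ranging over the open
   normal subgroups of finite index) is an isomorphism of topological groups:
   injective, surjective, and a homeomorphism (the N form a basis at e). *)
Definition profinite : Prop :=
  [/\ is_topgroup,
      (forall x, (forall N, open_normal_fi N -> N x) -> x = e),
      (* surjectivity: every compatible family of cosets is hit *)
      (forall xs : set T -> T,
         (forall N M, open_normal_fi N -> open_normal_fi M -> M `<=` N ->
            N (mul (inv (xs N)) (xs M))) ->
         exists x, forall N, open_normal_fi N -> N (mul (inv x) (xs N))) &
      (forall U : set T, open U -> U e -> exists N, open_normal_fi N /\ N `<=` U)].

Variable H : finZmodType.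

(* continuity into the finite discrete group H = local constancy *)
Definition cont1 (f : T -> H) : Prop := forall a : H, open [set g | f g = a].
Definition cont2 (c : T -> T -> H) : Prop :=
  forall a : H, open [set p : T * T | c p.1 p.2 = a].

(* inhomogeneous cochains, trivial action of G on H *)
Definition is_cocycle2 (c : T -> T -> H) : Prop :=
  forall g h k, c h k - c (mul g h) k + c g (mul h k) - c g h = 0.
Definition is_symmetric2 (c : T -> T -> H) : Prop := forall g h, c g h = c h g.
Definition cobound1 (f : T -> H) : T -> T -> H :=
  fun g h => f h - f (mul g h) + f g.

Definition Z2ts (c : T -> T -> H) : Prop :=
  [/\ cont2 c, is_cocycle2 c & is_symmetric2 c].
Definition B2ts (c : T -> T -> H) : Prop :=
  Z2ts c /\ exists f, cont1 f /\ forall g h, c g h = cobound1 f g h.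

(* Cochains on the finite quotient G/N, identified with cochains on G
   constant on N-cosets (the identification is precisely inflation). *)
Definition Ninv1 (N : set T) (f : T -> H) : Prop :=
  forall g n, N n -> f (mul g n) = f g.
Definition Ninv2 (N : set T) (c : T -> T -> H) : Prop :=
  forall g h n m, N n -> N m -> c (mul g n) (mul h m) = c g h.

Definition Z2ts_quot (N : set T) (c : T -> T -> H) : Prop :=
  [/\ Ninv2 N c, is_cocycle2 c & is_symmetric2 c].
Definition B2ts_quot (N : set T) (c : T -> T -> H) : Prop :=
  Z2ts_quot N c /\ exists f, Ninv1 N f /\ forall g h, c g h = cobound1 f g h.

(* The canonical (inflation) map  colim_N H^2_ts(G/N,H) -> H^2_ts(G,H)
   is an isomorphism (it is a well-defined homomorphism; bijectivity
   unfolds to the two conditions below). *)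
Definition H2ts_is_limit_of_quotients : Prop :=
  (forall c, Z2ts c -> exists N, open_normal_fi N /\
       exists c', Z2ts_quot N c' /\ B2ts (fun g h => c g h - c' g h)) /\
  (forall N c', open_normal_fi N -> Z2ts_quot N c' -> B2ts c' ->
       exists M, [/\ open_normal_fi M, M `<=` N & B2ts_quot M c']).

End TopGroup.

(* Main.v *)
Require Import Defs.
From HB Require Import structures.
From mathcomp Require Import all_boot all_algebra.
From mathcomp Require Import boolp classical_sets topology.
Import GRing.Theory.
Local Open Scope classical_set_scope.


Lemma loc (T : topologicalType) (mul : T -> T -> T) (inv : T -> T) (e : T)
  (hG : profinite mul inv e) (x : T) (S : set (T * T)) :
  nbhs (x, e) S -> exists V N, [/\ nbhs x V, open_normal_fi mul inv e N &
     forall y m, V y -> N m -> S (y, m)].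
Proof.
case: hG => _ _ _ hB.
case=> [[A B] /= [nA nB] sAB].
move: nB; rewrite nbhsE => -[O [oO Oe] sOB].
have [N [hN sN]] := hB O oO Oe.
exists A, N; split => // y m Ay Nm; apply: (sAB (y, m)); split => //.
exact/sOB/sN.
Qed.

Lemma ultra_fin (T : eqType) (G : set_system T) (A : T -> set T) (s : seq T) :
  UltraFilter G -> G [set y | exists x, x \in s /\ A x y] ->
  exists x, x \in s /\ G (A x).
Proof.
move=> UG GU; apply: contrapT => hn.
have hC : forall x, x \in s -> G (~` A x).
  move=> x xs; case: (in_ultra_setVsetC (A x) UG) => // GA.
  by exfalso; apply: hn; exists x.
have : G [set y | forall x, x \in s -> ~ A x y].
  elim: s hC {hn GU} => [|a s IH] hC.
    by apply: filterS filterT => y _ x.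
  have h1 := hC a (mem_head a s).
  have h2 := IH (fun x xs => hC x (@mem_behead _ (a :: s) x xs)).
  apply: filterS (filterI h1 h2) => y [ya ys] x; rewrite in_cons => /orP[/eqP->//|xs].
  exact: ys.
move=> Gc; have [y [[x [xs Axy]] ny]] := filter_ex (filterI GU Gc).
exact: ny xs Axy.
Qed.

Lemma unif (T : topologicalType) (mul : T -> T -> T) (inv : T -> T) (e : T)
  (hG : profinite mul inv e) (P : T -> T -> Prop) :
  (forall x : T, exists V N, [/\ nbhs x V, open_normal_fi mul inv e N &
     forall y m, V y -> N m -> P y m]) ->
  exists N, open_normal_fi mul inv e N /\ forall x m, N m -> P x m.
Proof.
move=> hloc; have hG' := hG.
case: hG => [[mA [m1 [m1' [mV [mV' [cm ci]]]]]] hinj hsurj hB].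
apply: contrapT => hn.
have hbad : forall N, open_normal_fi mul inv e N -> exists x m, N m /\ ~ P x m.
  move=> N hN; apply: contrapT => h; apply: hn; exists N; split=> // x m Nm.
  by apply: contrapT => nP; apply: h; exists x, m.
pose B := fun N => [set x | exists m, N m /\ ~ P x m].
pose F := filter_from (open_normal_fi mul inv e) B.
have FF : Filter F.
  apply: filter_from_filter.
    have [N [hN _]] := hB setT openT I; by exists N.
  move=> N M hN hM.
  have [K [hK sK]] := hB (N `&` M) (openI hN.2.2.2.2.1 hM.2.2.2.2.1)
                         (conj hN.1 hM.1).
  exists K => // x [m [Km nP]]; split; exists m; split => //; by case: (sK m Km).
have PF : ProperFilter F.
  apply: filter_from_proper => N hN.
  by have [x [m hm]] := hbad N hN; exists x, m.
have [G [UG sFG]] := ultraFilterLemma PF.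
have hcos : forall N, exists x, open_normal_fi mul inv e N ->
    G [set y | N (mul (inv x) y)].
  move=> N; case: (pselect (open_normal_fi mul inv e N)) => hN; last by exists e.
  have [_ [_ [_ [_ [_ [s hs]]]]]] := hN.
  have := @ultra_fin _ G (fun x => [set y | N (mul (inv x) y)]) s UG.
  case => [|x [_ Gx]]; last by exists x.
  by apply: filterS filterT => y _; apply: hs.
have [xs hxs] := choice hcos.
have hcomp : forall N M, open_normal_fi mul inv e N -> open_normal_fi mul inv e M ->
    M `<=` N -> N (mul (inv (xs N)) (xs M)).
  move=> N M hN hM sMN.
  have [z [zN zM]] := filter_ex (filterI (hxs N hN) (hxs M hM)).
  move: zN zM => /=; set u := mul (inv (xs M)) z => zN zM.
  have ez : z = mul (xs M) u by rewrite /u mA mV' m1.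
  have -> : mul (inv (xs N)) (xs M) = mul (mul (inv (xs N)) z) (inv u).
    by rewrite [in RHS]ez (mA (inv _) (xs M) u) -(mA _ u (inv u)) mV' m1'.
  apply: hN.2.1 => //; apply: hN.2.2.1; exact: sMN.
have [x hx] := hsurj xs hcomp.
have cvx : forall U, nbhs x U -> G U.
  move=> U nU.
  have : nbhs (x, e) [set p | U (mul p.1 p.2)].
    apply: (cm (x, e)); by rewrite /= m1'.
  case/(@loc _ _ _ _ hG' x) => V [N [nV hN hVN]].
  have Vx := nbhs_singleton nV.
  apply: filterS (hxs N hN) => z hz.
  have : U (mul x (mul (inv x) z)).
    apply: (hVN x (mul (inv x) z) Vx).
    have -> : mul (inv x) z = mul (mul (inv x) (xs N)) (mul (inv (xs N)) z).
      by rewrite -mA (mA (xs N)) mV' m1.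
    exact: hN.2.1 (hx N hN) hz.
  by rewrite mA mV' m1.
have [V [N [nV hN hVN]]] := hloc x.
have GV := cvx V nV.
have GB : G (B N) by apply: sFG; exists N.
have [y [Vy [m [Nm nP]]]] := filter_ex (filterI GV GB).
exact: nP (hVN y m Vy Nm).
Qed.

Local Open Scope ring_scope.
Lemma open_constP (U : topologicalType) (P : Prop) : open [set _ : U | P].
Proof.
case: (pselect P) => h.
  rewrite (_ : [set _ | P] = setT); first exact: openT.
  by apply/seteqP; split => p.
rewrite (_ : [set _ | P] = set0); first exact: open0.
by apply/seteqP; split => p.
Qed.

Lemma B2ts0 (T : topologicalType) (mul : T -> T -> T) (H : finZmodType) :
  B2ts mul (fun _ _ => (0 : H)).
Proof.
split; first split.
- by move=> a; apply: open_constP.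
- by move=> g h k; rewrite !subrr addr0 subrr.
- by [].
exists (fun _ => 0); split; first by move=> a; apply: open_constP.
by move=> g h; rewrite /cobound1 subrr addr0.
Qed.

Theorem mainTheorem9 (T : topologicalType) (mul : T -> T -> T) (inv : T -> T)
  (e : T) (H : finZmodType) :
  profinite mul inv e -> @H2ts_is_limit_of_quotients T mul inv e H.
Proof.
move=> hG; have hG' := hG.
case: hG => [[mA [m1 [m1' [mV [mV' [cm ci]]]]]] hinj hsurj hB].
split.
  move=> c [cc coc sym].
  have [N [hN hP]] : exists N, open_normal_fi mul inv e N /\
      forall x m, N m -> c x m = c x e.
    apply: (@unif _ _ _ _ hG') => x.
    have nS : nbhs (x, e) [set p | c p.1 p.2 = c x e].
      by apply: open_nbhs_nbhs; split; [exact: cc|].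
    have [V [N [nV hN hVN]]] := @loc _ _ _ _ hG' x _ nS.
    exists V, N; split => // y m Vy Nm.
    by rewrite (hVN y m Vy Nm) (hVN y e Vy hN.1).
  exists N; split => //; exists c; split; last first.
    rewrite (_ : (fun g h => c g h - c g h) = (fun _ _ => 0)); first exact: B2ts0.
    by apply: funext => g; apply: funext => h; rewrite subrr.
  split => //.
  have ce : forall g, c g e = c e e.
    move=> g; have := coc g e e; rewrite !m1' addrK => /eqP.
    by rewrite subr_eq0 => /eqP.
  have hr : forall g h m, N m -> c g (mul h m) = c g h.
    move=> g h m Nm; have := coc g h m.
    rewrite (hP h m Nm) (hP _ m Nm) !ce subrr add0r => /eqP.
    by rewrite subr_eq0 => /eqP.
  move=> g h n m Nn Nm.
  by rewrite (hr _ _ _ Nm) (sym (mul g n)) (hr _ _ _ Nn) sym.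
move=> N c' hN [hNi coc sym] [_ [f [cf hf]]].
have [M [hM hP]] : exists M, open_normal_fi mul inv e M /\
    forall x m, M m -> f (mul x m) = f x.
  apply: (@unif _ _ _ _ hG') => x.
  have nS : nbhs (x, e) [set p | f (mul p.1 p.2) = f x].
    have h1 : nbhs (mul x e) [set g | f g = f x].
      by apply: open_nbhs_nbhs; split; [exact: cf|rewrite /= m1'].
    exact: (cm (x, e) _ h1).
  have [V [N' [nV hN' hVN]]] := @loc _ _ _ _ hG' x _ nS.
  exists V, N'; split => // y m Vy Nm.
  by rewrite (hVN y m Vy Nm) -(hVN y e Vy hN'.1) /= m1'.
have [K [hK sK]] := hB (M `&` N) (openI hM.2.2.2.2.1 hN.2.2.2.2.1)
                       (conj hM.1 hN.1).
exists K; split => //.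
  by move=> x /sK [].
split.
  split => //.
  by move=> g h n m /sK [_ Nn] /sK [_ Nm]; apply: hNi.
exists f; split => //.
by move=> g n /sK [Mn _]; apply: hP.
Qed.
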